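(* Let $\alpha_1\in(0,1)$ be irrational and define $\alpha_{n+1}=1-\left\lfloor \frac{1}{\alpha_n}\right\rfloor\alpha_n$ for $n=1,2,\ldots$, where $\lfloor\cdot\rfloor$ is the floor function. Then $\lim_{n\to\infty}\alpha_n=0$. *)

(* Defs.v *)
From HB Require Import structures.
From mathcomp Require Import all_boot all_order all_algebra.
From mathcomp Require Import all_classical all_reals all_analysis.
Set Implicit Arguments. Unset Strict Implicit. Unset Printing Implicit Defensive.
Import Order.TTheory GRing.Theory Num.Theory.
Local Open Scope ring_scope.

(* alpha_seq a1 n = alpha_{n+1} (0-indexed): alpha_seq a1 0 = a1,
   alpha_{n+1} = 1 - floor(1/alpha_n) * alpha_n *)
Fixpoint alpha_seq {R : realType} (a1 : R) (n : nat) : R :=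
  match n with
  | 0%N => a1
  | k.+1 => let a := alpha_seq a1 k in 1 - (Num.floor (a^-1))%:~R * a
  end.

(* Main.v *)
Require Import Defs.
From HB Require Import structures.
From mathcomp Require Import all_boot all_order all_algebra.
From mathcomp Require Import all_classical all_reals all_analysis.
From mathcomp Require Import ring lra.
Import numFieldNormedType.Exports.
Import Order.TTheory GRing.Theory Num.Theory.
Local Open Scope ring_scope.
Local Open Scope classical_set_scope.

Lemma alpha_inv (R : realType) (a1 : R) :
  0 < a1 < 1 -> irrational a1 -> forall n,
  [/\ 0 < alpha_seq a1 n, alpha_seq a1 n < 1, irrational (alpha_seq a1 n)
   & (n.+1%:R : R) <= (Num.floor ((alpha_seq a1 n)^-1))%:~R].
Proof.
move=> /andP[a0 a1lt] ira; elim=> [|n [ap a1' ira' hn]].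
  split=> //=.
  have : (1 <= Num.floor a1^-1)%R by rewrite floor_ge_int invf_ge1 //; exact: ltW.
  by rewrite -(ler_int R).
rewrite /=; set a := alpha_seq a1 n in ap a1' ira' hn *.
set k := Num.floor a^-1.
set K : R := k%:~R.
have Kle : K <= a^-1 by exact: floor_le.
have Kne : K != a^-1.
  apply/negP => /eqP HK; apply: ira'.
  exists (k%:~R^-1) => //.
  by rewrite fmorphV /= ratr_int -/K HK invrK.
have Klt : K < a^-1 by rewrite lt_neqAle Kne Kle.
have Kgt : a^-1 < K + 1 by rewrite /K -[1]/(1%:~R) -intrD; exact: floorD1_gt.
have K1 : 1 <= K.
  have : (1 <= k)%R by rewrite floor_ge_int invf_ge1 //; exact: ltW.
  by rewrite -(ler_int R).
have Ka : K * a < 1 by rewrite -(mulVf (lt0r_neq0 ap)) ltr_pM2r.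
have Ka2 : 1 < (K + 1) * a.
  have := mulVf (lt0r_neq0 ap); nra.
have a'p : 0 < 1 - K * a by lra.
split.
- by [].
- have : 0 < K * a by apply: mulr_gt0 => //; lra.
  lra.
- move=> [q _ Hq]; apply: ira'.
  exists ((1 - q) / k%:~R) => //.
  rewrite fmorph_div /= ratr_int rmorphB /= rmorph1 Hq -/K.
  field; lra.
- have H1 : (K + 1) * (1 - K * a) <= 1 by nra.
  have H2 : K + 1 <= (1 - K * a)^-1.
    by rewrite -(ler_pM2r a'p) mulVf ?lt0r_neq0.
  have H3 : (k + 1 <= Num.floor (1 - K * a)^-1)%R.
    by rewrite floor_ge_int intrD.
  have H4 : ((k + 1)%:~R : R) <= (Num.floor (1 - K * a)^-1)%:~R by rewrite ler_int.
  rewrite intrD -/K in H4.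
  apply: le_trans H4; rewrite -[n.+2]addn1 natrD; lra.
Qed.

Theorem lemma2p3 (R : realType) (a1 : R) :
  0 < a1 < 1 -> irrational a1 ->
  (fun n => alpha_seq a1 n) @ \oo --> (0 : R^o).
Proof.
move=> ha ira.
apply: (@squeeze_cvgr _ _ _ R (fun _ => 0) (@harmonic R)).
- apply: nearW => n.
  have [ap _ _ hn] := @alpha_inv R a1 ha ira n.
  rewrite (ltW ap) /=.
  have hf : (Num.floor (alpha_seq a1 n)^-1)%:~R <= (alpha_seq a1 n)^-1 by exact: floor_le.
  have hn' := le_trans hn hf.
  have hm := mulVf (lt0r_neq0 ap).
  have h1 : alpha_seq a1 n * n.+1%:R <= 1 by nra.
  have hp : (0 : R) < n.+1%:R by rewrite ltr0n.
  rewrite /= -(ler_pM2r hp) mulVf ?lt0r_neq0 //.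
- exact: cvg_cst.
- exact: cvg_harmonic.
Qed.
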